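(* Let $\kappa\in(0,\infty)$. There exists $C\in(0,\infty)$ such that for all $R,N\in[1,\infty)$ $$-C\le\sum_{l=0}^\infty\frac{2l+1}{2R^2\,(1+l(l+1)/R^2)\,(1+l(l+1)/(NR)^2)^\kappa}-\log(N+1)\le C.$$ *)

(* Defs.v *)
From HB Require Import structures.
From mathcomp Require Import all_boot all_order all_algebra.
From mathcomp Require Import all_classical all_reals all_analysis.
Set Implicit Arguments. Unset Strict Implicit. Unset Printing Implicit Defensive.
Import Order.TTheory GRing.Theory Num.Theory.
Local Open Scope ring_scope.

Definition summand (R : realType) (kappa Rr N : R) (l : nat) : R :=
  (2 * l%:R + 1) /
  (2 * Rr ^+ 2 * (1 + (l%:R * (l%:R + 1)) / Rr ^+ 2)
     * (1 + (l%:R * (l%:R + 1)) / (N * Rr) ^+ 2) `^ kappa).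

(* Main.v *)
Require Import Defs.
From HB Require Import structures.
From mathcomp Require Import all_boot all_order all_algebra.
From mathcomp Require Import all_classical all_reals all_analysis.
From mathcomp Require Import ring lra.
Import Order.TTheory GRing.Theory Num.Theory.
Local Open Scope ring_scope.
Section S.
Context {R : realType}.
Implicit Types a b A L : R.

Lemma ln_sub_le a b : 0 < a -> 0 < b -> ln b - ln a <= (b - a) / a.
Proof.
move=> a0 b0; rewrite -ln_div ?posrE //.
have -> : b / a = 1 + (b - a) / a by field; rewrite lt0r_neq0.
apply: le_ln1Dx.
have -> : (b - a) / a = b / a - 1 by field; rewrite lt0r_neq0.
have : 0 < b / a by exact: divr_gt0.
lra.
Qed.

Lemma poly_err A L : 1 <= A -> 0 <= L ->
  (2 * L + 1) / (A + L ^+ 2) - (2 * L + 1) / (A + (L + 1) ^+ 2)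
  <= 8 / (L + 1) - 8 / (L + 2).
Proof.
move=> A1 L0.
have h1 : 0 < A + L ^+ 2 by nra.
have h2 : 0 < A + (L + 1) ^+ 2 by nra.
rewrite -subr_ge0.
have -> : 8 / (L + 1) - 8 / (L + 2) -
  ((2 * L + 1) / (A + L ^+ 2) - (2 * L + 1) / (A + (L + 1) ^+ 2)) =
  (8 * (A + L ^+ 2) * (A + (L + 1) ^+ 2) - (2 * L + 1) ^+ 2 * (L + 1) * (L + 2))
  / ((L + 1) * (L + 2) * (A + L ^+ 2) * (A + (L + 1) ^+ 2)).
  field. by rewrite !lt0r_neq0 //; lra.
apply: divr_ge0; last by rewrite !mulr_ge0 //; nra.
have hA : (A - 1) * (A - 1) >= 0 by nra.
have : 0 <= (A - 1) * L ^+ 2 by nra.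
have : 0 <= (A - 1) * L by nra.
nra.
Qed.

Lemma inv_le a b : 0 < a -> a <= b -> b^-1 <= a^-1.
Proof. move=> a0 ab; rewrite lef_pV2 ?posrE //; lra. Qed.

Definition xx (l : nat) : R := l%:R * (l%:R + 1).
Definition tt (A : R) (l : nat) : R := (2 * l%:R + 1) / (A + xx l).

Lemma xx_ge0 l : 0 <= xx l.
Proof. rewrite /xx; apply: mulr_ge0 => //; lra. Qed.

Lemma xxS l : xx l.+1 = xx l + 2 * (l%:R + 1).
Proof. rewrite /xx -natr1; ring. Qed.

Lemma tt_both A l : 1 <= A ->
  tt A l <= ln (A + (l%:R + 1) ^+ 2) - ln (A + l%:R ^+ 2) + (8 / (l%:R + 1) - 8 / (l%:R + 2)) /\
  ln (A + (l%:R + 1) ^+ 2) - ln (A + l%:R ^+ 2) <= tt A l + (8 / (l%:R + 1) - 8 / (l%:R + 2)).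
Proof.
move=> A1.
have L0 : 0 <= (l%:R : R) by [].
have h1 : 0 < A + l%:R ^+ 2 by nra.
have h2 : 0 < A + (l%:R + 1) ^+ 2 by nra.
have e := @poly_err A (l%:R) A1 L0.
have u1 := ln_sub_le _ _ h1 h2.
have u2 := ln_sub_le _ _ h2 h1.
have e1 : (A + (l%:R + 1) ^+ 2 - (A + l%:R ^+ 2)) = 2 * l%:R + 1 by ring.
have e2 : (A + l%:R ^+ 2 - (A + (l%:R + 1) ^+ 2)) = - (2 * l%:R + 1) by ring.
rewrite e1 in u1; rewrite e2 in u2.
have t1 : tt A l <= (2 * l%:R + 1) / (A + l%:R ^+ 2).
  rewrite /tt; apply: ler_wpM2l; first lra.
  apply: inv_le => //; rewrite /xx; nra.
have t2 : (2 * l%:R + 1) / (A + (l%:R + 1) ^+ 2) <= tt A l.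
  rewrite /tt; apply: ler_wpM2l; first lra.
  apply: inv_le; first by have := xx_ge0 l; lra.
  rewrite /xx; nra.
rewrite mulNr in u2.
split; lra.
Qed.

Lemma sum_tt A n : 1 <= A ->
  \sum_(0 <= l < n) tt A l <= ln (A + n%:R ^+ 2) - ln A + (8 - 8 / (n%:R + 1)) /\
  ln (A + n%:R ^+ 2) - ln A - (8 - 8 / (n%:R + 1)) <= \sum_(0 <= l < n) tt A l.
Proof.
move=> A1; elim: n => [|n [IH1 IH2]].
  rewrite big_geq // expr0n /= addr0 add0r divr1; lra.
rewrite big_nat_recr //= -natr1.
have [u v] := @tt_both A n A1.
have -> : (n%:R + 1 + 1 : R) = n%:R + 2 by ring.
split; lra.
Qed.

Lemma tele_bound (T g : nat -> R) n : (forall l, 0 <= T l) ->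
  (forall l, T l.+1 <= g l - g l.+1) ->
  \sum_(0 <= l < n) T l <= T 0%N + (g 0%N - g n).
Proof.
move=> T0 Tg.
have H : forall n, \sum_(0 <= l < n) T l.+1 <= g 0%N - g n.
  elim=> [|k IH]; first by rewrite big_geq // subrr.
  rewrite big_nat_recr //=; have := Tg k; lra.
apply: (@le_trans _ _ (\sum_(0 <= l < n.+1) T l)).
  rewrite big_nat_recr //=; have := T0 n; lra.
rewrite big_nat_recl //; have := H n; lra.
Qed.

Definition qq (k M : R) (l : nat) : R := expR (- (k * ln (1 + xx l / M))).

Lemma w_ge1 M l : 0 < M -> 1 <= 1 + xx l / M.
Proof. move=> M0; have : 0 <= xx l / M by apply: divr_ge0; [exact: xx_ge0|lra]. lra. Qed.

Lemma qq_ge0 k M l : 0 <= qq k M l.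
Proof. exact: expR_ge0. Qed.

Lemma qq_le1 k M l : 0 <= k -> 0 < M -> qq k M l <= 1.
Proof.
move=> k0 M0; rewrite /qq -[X in _ <= X]expR0 ler_expR.
have := ln_ge0 (@w_ge1 M l M0) => h; have : 0 <= k * ln (1 + xx l / M) by exact: mulr_ge0.
lra.
Qed.

Lemma qq0 k M : qq k M 0%N = 1.
Proof. by rewrite /qq /xx mul0r mul0r addr0 ln1 mulr0 oppr0 expR0. Qed.

Lemma qq_tele k M l : 0 <= k -> 0 < M ->
  k * (2 * (l%:R + 1) / (M + xx l.+1)) * qq k M l.+1 <= qq k M l - qq k M l.+1.
Proof.
move=> k0 M0.
set w := 1 + xx l / M; set w' := 1 + xx l.+1 / M.
have w0 : 0 < w by have := @w_ge1 M l M0; rewrite -/w; lra.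
have w'0 : 0 < w' by have := @w_ge1 M l.+1 M0; rewrite -/w'; lra.
have hx0 := xx_ge0 l.+1.
have d := ln_sub_le _ _ w'0 w0.
have e : (w - w') / w' = - (2 * (l%:R + 1) / (M + xx l.+1)).
  rewrite /w /w' xxS; field.
  by rewrite !lt0r_neq0 //; rewrite -?xxS; lra.
rewrite e in d.
have qe : qq k M l = expR (k * (ln w' - ln w)) * qq k M l.+1.
  by rewrite /qq -/w -/w' -expRD; congr expR; ring.
have ex := expR_ge1Dx (k * (ln w' - ln w)).
have kd : k * (2 * (l%:R + 1) / (M + xx l.+1)) <= k * (ln w' - ln w).
  apply: ler_wpM2l => //; lra.
rewrite qe.
have q0 := qq_ge0 k M l.+1.
have : (k * (2 * (l%:R + 1) / (M + xx l.+1))) * qq k M l.+1 <=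
  (expR (k * (ln w' - ln w)) - 1) * qq k M l.+1.
  apply: ler_wpM2r => //; lra.
lra.
Qed.

Definition T3 k M l := (2 * l%:R + 1) * qq k M l / (M + xx l).

Lemma sum_T3 k M n : 0 < k -> 1 <= M ->
  \sum_(0 <= l < n) T3 k M l <= 1 + 3 / 2 * k^-1.
Proof.
move=> k0 M1.
have M0 : 0 < M by lra.
have := @tele_bound (T3 k M) (fun l => 3 / 2 * k^-1 * qq k M l) n.
have T0 : forall l, 0 <= T3 k M l.
  move=> l; rewrite /T3; apply: divr_ge0; last by have := xx_ge0 l; lra.
  apply: mulr_ge0; [have : (0:R) <= l%:R by []; lra| exact: qq_ge0].
have step : forall l, T3 k M l.+1 <= 3 / 2 * k^-1 * qq k M l - 3 / 2 * k^-1 * qq k M l.+1.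
  move=> l; have := @qq_tele k M l (ltW k0) M0.
  rewrite /T3 -natr1 => h.
  have hx := xx_ge0 l.+1.
  have q0 := qq_ge0 k M l.+1.
  set q := qq k M l.+1 in h *; set q0' := qq k M l in h *.
  set D := (M + xx l.+1) in h *.
  have D0 : 0 < D by rewrite /D; lra.
  have : (2 * (l%:R + 1) + 1) * q / D <= 3 / 2 * (2 * (l%:R + 1) * q / D).
    rewrite -subr_ge0.
    have -> : 3 / 2 * (2 * (l%:R + 1) * q / D) - (2 * (l%:R + 1) + 1) * q / D = l%:R * q / D.
      by field; rewrite lt0r_neq0.
    apply: divr_ge0; [exact: mulr_ge0 | lra].
  have -> : 3 / 2 * k^-1 * q0' - 3 / 2 * k^-1 * q = 3 / 2 * k^-1 * (q0' - q) by ring.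
  have : 3 / 2 * k^-1 * (k * (2 * (l%:R + 1) / D) * q) <= 3 / 2 * k^-1 * (q0' - q).
    apply: ler_wpM2l => //. apply: mulr_ge0; [lra| by rewrite invr_ge0; lra].
  have -> : 3 / 2 * k^-1 * (k * (2 * (l%:R + 1) / D) * q) = 3 / 2 * (2 * (l%:R + 1) * q / D).
    by field; rewrite !lt0r_neq0.
  lra.
move=> /(_ T0 step).
have t0 : T3 k M 0%N <= 1.
  have -> : T3 k M 0%N = M^-1 by rewrite /T3 qq0 /xx mulr0n; field; rewrite lt0r_neq0.
  by rewrite invf_le1.
have qn := qq_ge0 k M n.
have kk : 0 <= 3 / 2 * k^-1 by apply: mulr_ge0; [lra| by rewrite invr_ge0; lra].
have : 0 <= 3 / 2 * k^-1 * qq k M n by exact: mulr_ge0.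
rewrite qq0 mulr1; lra.
Qed.

Definition T4 M l := (2 * l%:R + 1) * M / (M + xx l) ^+ 2.

Lemma sum_T4 M n : 1 <= M -> \sum_(0 <= l < n) T4 M l <= 5 / 2.
Proof.
move=> M1.
have M0 : 0 < M by lra.
have := @tele_bound (T4 M) (fun l => 3 / 2 * M / (M + xx l)) n.
have T0 : forall l, 0 <= T4 M l.
  move=> l; rewrite /T4; apply: divr_ge0; last by have := xx_ge0 l; nra.
  apply: mulr_ge0; [have : (0:R) <= l%:R by []; lra | lra].
have step : forall l, T4 M l.+1 <= 3 / 2 * M / (M + xx l) - 3 / 2 * M / (M + xx l.+1).
  move=> l; rewrite /T4 -[l.+1%:R]natr1 xxS.
  have hx := xx_ge0 l.
  have L0 : (0 : R) <= l%:R by [].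
  set x := xx l in hx *.
  rewrite -subr_ge0.
  have -> : 3 / 2 * M / (M + x) - 3 / 2 * M / (M + (x + 2 * (l%:R + 1))) -
    (2 * (l%:R + 1) + 1) * M / (M + (x + 2 * (l%:R + 1))) ^+ 2 =
    M * (3 * (l%:R + 1) * (M + (x + 2 * (l%:R + 1))) - (2 * l%:R + 3) * (M + x))
    / ((M + x) * (M + (x + 2 * (l%:R + 1))) ^+ 2).
    by field; rewrite !lt0r_neq0 //; lra.
  apply: divr_ge0; last by apply: mulr_ge0; nra.
  apply: mulr_ge0; first lra. nra.
move=> /(_ T0 step).
have t0 : T4 M 0%N <= 1.
  have -> : T4 M 0%N = M^-1 by rewrite /T4 /xx mulr0n; field; rewrite lt0r_neq0.
  by rewrite invf_le1.
have : 0 <= 3 / 2 * M / (M + xx n).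
  by apply: divr_ge0; [nra | have := xx_ge0 n; lra].
have -> : 3 / 2 * M / (M + xx 0%N) = 3 / 2 by rewrite /xx mulr0n; field; rewrite lt0r_neq0.
lra.
Qed.

Lemma one_sub_q k M l : 0 < k -> 0 < M ->
  1 - qq k M l <= 2 * (k + 1) * xx l / (M + xx l).
Proof.
move=> k0 M0.
have hx := xx_ge0 l; set x := xx l in hx *.
have D0 : 0 < M + x by lra.
have q0 := qq_ge0 k M l.
case: (lerP x M) => hxM.
  have h1 := expR_ge1Dx (- (k * ln (1 + x / M))).
  have xM0 : 0 <= x / M by apply: divr_ge0; lra.
  have h2 : ln (1 + x / M) <= x / M by apply: le_ln1Dx; lra.
  have h3 : k * ln (1 + x / M) <= k * (x / M) by apply: ler_wpM2l => //; lra.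
  have h4 : k * (x / M) <= 2 * (k + 1) * x / (M + x).
    rewrite -subr_ge0.
    have -> : 2 * (k + 1) * x / (M + x) - k * (x / M) = x * (k * (M - x) + 2 * M) / (M * (M + x)).
      by field; rewrite !lt0r_neq0.
    apply: divr_ge0; last by nra.
    apply: mulr_ge0 => //; nra.
  rewrite /qq -/x; lra.
have h4 : 1 <= 2 * (k + 1) * x / (M + x).
  rewrite ler_pdivlMr //; nra.
lra.
Qed.

Lemma term_up k A1 M l : 0 < k -> 1 <= A1 -> A1 <= M ->
  1 / 2 * tt A1 l * qq k M l <= 1 / 2 * tt A1 l - 1 / 2 * tt M l + T3 k M l.
Proof.
move=> k0 A0 AM.
have hx := xx_ge0 l.
have q0 := qq_ge0 k M l.
have q1 : qq k M l <= 1 by apply: qq_le1; lra.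
have L0 : (0 : R) <= l%:R by [].
rewrite /tt /T3.
set q := qq k M l in q0 q1 *.
set u := (A1 + xx l)^-1.
set v := (M + xx l)^-1.
have v0 : 0 <= v by rewrite /v invr_ge0; lra.
have vu : v <= u by apply: inv_le; lra.
have h1 : 0 <= (1 - q) * (u - v) by apply: mulr_ge0; lra.
have h2 : 0 <= q * v by exact: mulr_ge0.
have key : q * u <= u - v + 2 * q * v by nra.
have c0 : (0 : R) <= (2 * l%:R + 1) / 2 by lra.
have := ler_wpM2l c0 key.
rewrite !mulrA; lra.
Qed.

Lemma term_lo k A1 M l : 0 < k -> 1 <= A1 -> A1 <= M ->
  1 / 2 * tt A1 l - 1 / 2 * tt M l - (k + 1) * T4 M l <= 1 / 2 * tt A1 l * qq k M l.
Proof.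
move=> k0 A0 AM.
have hx := xx_ge0 l.
have q0 := qq_ge0 k M l.
have M0 : 0 < M by lra.
have q1 : qq k M l <= 1 by apply: qq_le1; lra.
have L0 : (0 : R) <= l%:R by [].
have oq := @one_sub_q k M l k0 M0.
rewrite /tt /T4.
set q := qq k M l in q0 q1 oq *.
set x := xx l in hx oq *.
have D1 : 0 < A1 + x by lra.
have D2 : 0 < M + x by lra.
set u := (A1 + x)^-1.
set v := (M + x)^-1.
have v0 : 0 <= v by rewrite /v invr_ge0; lra.
have vu : v <= u by apply: inv_le; lra.
have uv : u - v <= M / ((A1 + x) * (M + x)).
  have -> : u - v = (M - A1) / ((A1 + x) * (M + x)) by rewrite /u /v; field; rewrite !lt0r_neq0.
  apply: ler_wpM2r; [by rewrite invr_ge0; nra | lra].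
have e1 : (1 - q) * (u - v) <= (2 * (k + 1) * x / (M + x)) * (M / ((A1 + x) * (M + x))).
  apply: ler_pM => //; lra.
have e2 : (2 * (k + 1) * x / (M + x)) * (M / ((A1 + x) * (M + x))) <= 2 * (k + 1) * M / (M + x) ^+ 2.
  rewrite -subr_ge0.
  have -> : 2 * (k + 1) * M / (M + x) ^+ 2 - (2 * (k + 1) * x / (M + x)) * (M / ((A1 + x) * (M + x)))
     = 2 * (k + 1) * M * A1 / ((M + x) ^+ 2 * (A1 + x)).
    by field; rewrite !lt0r_neq0.
  apply: divr_ge0; first by rewrite !mulr_ge0 //; lra.
  apply: mulr_ge0; [exact: sqr_ge0 | lra].
have h3 : 0 <= (1 - q) * v by apply: mulr_ge0; lra.
have key : u - v - 2 * (k + 1) * M / (M + x) ^+ 2 <= q * u by nra.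
have c0 : (0 : R) <= (2 * l%:R + 1) / 2 by lra.
have := ler_wpM2l c0 key.
have -> : (k + 1) * ((2 * l%:R + 1) * M / (M + x) ^+ 2) = (2 * l%:R + 1) / 2 * (2 * (k + 1) * M / (M + x) ^+ 2).
  by field; rewrite !lt0r_neq0.
rewrite !mulrA; lra.
Qed.

Lemma summand_eq k Rr N l : 1 <= Rr -> 1 <= N ->
  summand k Rr N l = 1 / 2 * tt (Rr ^+ 2) l * qq k ((N * Rr) ^+ 2) l.
Proof.
move=> R1 N1.
have hx := xx_ge0 l.
have M0 : 0 < (N * Rr) ^+ 2 by apply: exprn_gt0; nra.
have A0 : 0 < Rr ^+ 2 by apply: exprn_gt0; lra.
have w0 : 0 < 1 + xx l / (N * Rr) ^+ 2.
  have : 0 <= xx l / (N * Rr) ^+ 2 by apply: divr_ge0; lra. lra.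
rewrite /summand /powR -/(xx l) gt_eqF // /qq /tt expRN.
have E0 := expR_gt0 (k * ln (1 + xx l / (N * Rr) ^+ 2)).
field.
by rewrite !lt0r_neq0 //; lra.
Qed.
End S.

Theorem mainTheorem8 (R : realType) (kappa : R) (hkappa : 0 < kappa) :
  exists C : R, 0 < C /\
    forall Rr N : R, 1 <= Rr -> 1 <= N ->
      ((- C)%:E <= (\sum_(0 <= l <oo) (summand kappa Rr N l)%:E) - (ln (N + 1))%:E
       /\ (\sum_(0 <= l <oo) (summand kappa Rr N l)%:E) - (ln (N + 1))%:E <= C%:E)%E.
Proof.
have ki : 0 < kappa^-1 by rewrite invr_gt0.
exists (20 + 2 / kappa + 3 * kappa); split; first lra.
move=> Rr N R1 N1.
set A1 := Rr ^+ 2; set M := (N * Rr) ^+ 2.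
have A1ge : 1 <= A1 by rewrite /A1; nra.
have AM : A1 <= M.
  have : 0 <= (N ^+ 2 - 1) * Rr ^+ 2 by apply: mulr_ge0; nra.
  rewrite /A1 /M exprMn; nra.
have M1 : 1 <= M by lra.
have N0 : 0 < N by lra.
have R0 : 0 < Rr by lra.
have lnMA : ln M - ln A1 = 2 * ln N.
  rewrite /M /A1 exprMn lnM ?posrE ?exprn_gt0 // !lnXn //; rewrite !mulr2n; ring.
have hterm : forall l, summand kappa Rr N l = 1 / 2 * tt A1 l * qq kappa M l.
  by move=> l; rewrite summand_eq.
have s0 : forall l, 0 <= summand kappa Rr N l.
  move=> l; rewrite hterm; apply: mulr_ge0; last exact: qq_ge0.
  apply: mulr_ge0; first lra.
  rewrite /tt; apply: divr_ge0; first by have : (0:R) <= l%:R by []; lra.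
  have := @xx_ge0 R l; lra.
have lnN : ln N <= ln (N + 1) by rewrite ler_ln ?posrE; lra.
have Pup : forall n, \sum_(0 <= l < n) summand kappa Rr N l <= ln (N + 1) + (20 + 2 / kappa + 3 * kappa).
  move=> n.
  have : \sum_(0 <= l < n) summand kappa Rr N l <=
      \sum_(0 <= l < n) (1 / 2 * tt A1 l - 1 / 2 * tt M l + T3 kappa M l).
    by apply: ler_sum => l _; rewrite hterm; exact: term_up.
  rewrite big_split /= sumrB -!mulr_sumr.
  have [s1 _] := sum_tt A1 n A1ge.
  have [_ s2] := sum_tt M n M1.
  have s3 := sum_T3 kappa M n hkappa M1.
  have n20 : (0 : R) <= n%:R ^+ 2 by exact: sqr_ge0.
  have ll : ln (A1 + n%:R ^+ 2) <= ln (M + n%:R ^+ 2) by rewrite ler_ln ?posrE; lra.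
  have e8 : 0 <= 8 / (n%:R + 1) :> R by apply: divr_ge0; [lra | have : (0:R) <= n%:R by []; lra].
  lra.
have Plo : exists n, ln (N + 1) - (20 + 2 / kappa + 3 * kappa) <= \sum_(0 <= l < n) summand kappa Rr N l.
  exists (Num.bound M).
  set n := Num.bound M.
  have nM : M < n%:R by apply: archi_boundP; lra.
  have n2 : M <= n%:R ^+ 2 by nra.
  have : \sum_(0 <= l < n) (1 / 2 * tt A1 l - 1 / 2 * tt M l - (kappa + 1) * T4 M l) <=
      \sum_(0 <= l < n) summand kappa Rr N l.
    by apply: ler_sum => l _; rewrite hterm; exact: term_lo.
  rewrite !sumrB -!mulr_sumr.
  have [_ s1] := sum_tt A1 n A1ge.
  have [s2 _] := sum_tt M n M1.
  have s4 := sum_T4 M n M1.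
  have s4' : (kappa + 1) * \sum_(0 <= l < n) T4 M l <= (kappa + 1) * (5 / 2).
    apply: ler_wpM2l => //; lra.
  have n20 : (0 : R) <= n%:R ^+ 2 by exact: sqr_ge0.
  have ll : ln (M + n%:R ^+ 2) - ln (A1 + n%:R ^+ 2) <= 1.
    apply: le_trans (ln_sub_le _ _ _ _) _; try lra.
    rewrite ler_pdivrMr; lra.
  have lN : ln (N + 1) - ln N <= 1.
    apply: le_trans (ln_sub_le _ _ _ _) _; try lra.
    rewrite ler_pdivrMr; lra.
  have e8 : 0 <= 8 / (n%:R + 1) :> R by apply: divr_ge0; [lra | have : (0:R) <= n%:R by []; lra].
  lra.
have Sup : (\sum_(0 <= l <oo) (summand kappa Rr N l)%:E <= (ln (N + 1) + (20 + 2 / kappa + 3 * kappa))%:E)%E.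
  apply: lime_le; first by apply: is_cvg_nneseries => l _ _; rewrite lee_fin.
  by apply: nearW => n; rewrite sumEFin lee_fin.
have [n Pn] := Plo.
have Slo : ((ln (N + 1) - (20 + 2 / kappa + 3 * kappa))%:E <= \sum_(0 <= l <oo) (summand kappa Rr N l)%:E)%E.
  apply: le_trans (nneseries_lim_ge n _); last by move=> l _ _; rewrite lee_fin.
  by rewrite sumEFin lee_fin.
move: Sup Slo.
case: (\sum_(0 <= l <oo) (summand kappa Rr N l)%:E)%E => [s||] //=.
rewrite !lee_fin => h1 h2. split; lra.
Qed.
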